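(* The truncated cube (the convex polyhedron with $8$ triangular and $6$ octagonal faces obtained by truncating the vertices of a cube, in which every triangle is surrounded by three octagons and no two triangles share a vertex) has no facet path.
   Context: For a polyhedron, the (vertex-facet) incidence graph is the bipartite graph whose nodes are the faces (facets) and vertices of the polyhedron, with an arc $(v,f)$ whenever $v$ is a vertex of face $f$. A facet path is a trail $(v_0,f_1,v_1,f_2,\dots,f_k,v_k)$ in the incidence graph (no arc repeated) that contains every facet node exactly once; vertex nodes may repeat. *)

(* Defs.v *)
From mathcomp Require Import all_boot.
Set Implicit Arguments. Unset Strict Implicit. Unset Printing Implicit Defensive.

Section FacetPath.
Variables (V F : finType) (inc : V -> F -> bool).

(* A trail (v0, f1, v1, ..., fk, vk) in the bipartite incidence graph is
   represented by its start vertex v0 and the list [:: (f1,v1); ...; (fk,vk)]. *)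
Fixpoint is_walk (v : V) (s : seq (F * V)) : bool :=
  match s with
  | [::] => true
  | (f, w) :: s' => [&& inc v f, inc w f & is_walk w s']
  end.

Fixpoint trail_arcs (v : V) (s : seq (F * V)) : seq (V * F) :=
  match s with
  | [::] => [::]
  | (f, w) :: s' => (v, f) :: (w, f) :: trail_arcs w s'
  end.

Definition facet_path (v0 : V) (s : seq (F * V)) : bool :=
  [&& is_walk v0 s, uniq (trail_arcs v0 s) & perm_eq (map fst s) (enum F)].
End FacetPath.

(* Cube vertices are points of {0,1}^3.  A vertex of the truncated cube is a
   pair (c, i): the cut point near cube vertex c on the cube edge of direction i. *)
Definition tc_vertex := ({ffun 'I_3 -> bool} * 'I_3)%type.
(* Facets: inl c = triangle cutting off cube vertex c (8 of them);
           inr (j, b) = octagon coming from cube face {x | x_j = b} (6 of them). *)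
Definition tc_facet := ({ffun 'I_3 -> bool} + ('I_3 * bool))%type.

Definition tc_inc (x : tc_vertex) (f : tc_facet) : bool :=
  match f with
  | inl c => c == x.1
  | inr (j, b) => (j != x.2) && (x.1 j == b)
  end.

(* Main.v *)
Require Import Defs.
From mathcomp Require Import all_boot.

Definition isT (f : tc_facet) : bool := if f is inl _ then true else false.

Lemma key (v : tc_vertex) (s : seq (tc_facet * tc_vertex)) :
  is_walk tc_inc v s -> uniq (map fst s) ->
  count isT (map fst s) <= count (predC isT) (map fst s) + 1 /\
  (match s with (inl _, _) :: _ => True | _ => count isT (map fst s) <= count (predC isT) (map fst s) end).
Proof.
elim: s v => [|[f w] s IH] v //=.
case/and3P=> _ Hw Hs /andP[Hf Hu].
have [IH1 IH2] := IH w Hs Hu.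
case: f Hw Hf => [c|[j b]] Hw Hf /=.
- split => //.
  rewrite add0n addn1 ltnS.
  move: IH2 Hs Hf Hw; case: s {IH IH1 Hu} => [|[g u] s'] //=.
  case: g => [c'|[j' b']] //= _ /and3P[Hc' _ _].
  rewrite inE => /negP Hn /eqP Hc; exfalso; apply: Hn.
  apply/orP; left; move/eqP: Hc' => ->; by rewrite Hc.
- rewrite add0n; split; apply: leq_trans IH1 _; by rewrite addnC ?leq_addr.
Qed.

Lemma cnt (a : pred tc_facet) :
  count a (enum (tc_facet : finType)) =
  count a (sum_enum {ffun 'I_3 -> bool} ('I_3 * bool)%type).
Proof.
apply/permP; apply: uniq_perm; first exact: enum_uniq.
  exact: sum_enum_uniq.
by move=> x; rewrite mem_enum mem_sum_enum.
Qed.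

Theorem mainTheorem10 :
  forall (v0 : tc_vertex) (s : seq (tc_facet * tc_vertex)),
    ~~ facet_path tc_inc v0 s.
Proof.
move=> v0 s; apply/negP => /and3P[Hw _ Hp].
have Hu : uniq (map fst s) by rewrite (perm_uniq Hp) enum_uniq.
have [H1 _] := @key v0 s Hw Hu.
move: H1; rewrite (permP Hp isT) (permP Hp (predC isT)) !cnt /sum_enum !count_cat !count_map.
rewrite (@eq_count _ (preim _ isT) predT) // (@eq_count _ (preim _ isT) pred0) //.
rewrite (@eq_count _ (preim _ (predC isT)) pred0) // (@eq_count _ (preim _ (predC isT)) predT) //.
rewrite !count_pred0 !count_predT -!enumT -!cardT card_ffun card_prod !card_ord card_bool.
by [].
Qed.
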